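(* Let $V$ be a real vector space of dimension $d>1$ and $\Gamma<\mathrm{SL}(V)$ a torsion-free projective Anosov subgroup with limit maps $\xi,\xi^*$. Let $\gamma_k\in\Gamma$ be a sequence with distinct boundary limits $\gamma_+=\lim\gamma_k\in\partial_\infty\Gamma$ and $\gamma_-=\lim\gamma_k^{-1}\in\partial_\infty\Gamma$. Then for any sequence $v_k\to v\in V\setminus\{0\}$ such that $[v]\not\subset\ker\xi^*(\gamma_-)$, one has $\gamma_kv_k\to\infty$ as $k\to\infty$.
   Context: Projective Anosov: finitely generated Gromov hyperbolic with $\lambda_1(\gamma)-\lambda_2(\gamma)\ge c|\gamma|_\infty-c'$ for constants $c,c'>0$ ($\lambda_i$ log-moduli of eigenvalues in decreasing order, $|\cdot|_\infty$ stable word length). The limit maps $\xi:\partial_\infty\Gamma\to\mathbb{P}(V)$, $\xi^*:\partial_\infty\Gamma\to\mathbb{P}(V^* )$ are the unique continuous $\Gamma$-equivariant maps with $\xi(x)\subset\ker\xi^*(y)$ iff $x=y$ and $\xi(\gamma_+)$ (resp. $\xi^*(\gamma_-)$) the top eigenline of infinite order $\gamma$ (resp. of its dual action). Convergence $\gamma_k\to\gamma_+$ is in the compactification $\Gamma\cup\partial_\infty\Gamma$. $\gamma_kv_k\to\infty$ means the sequence leaves every compact subset of $V$. *)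

(* Defs.v *)
From HB Require Import structures.
From mathcomp Require Import all_boot all_order all_algebra.
From mathcomp Require Import all_classical all_reals all_analysis.
From mathcomp Require Import complex.

Set Implicit Arguments.
Unset Strict Implicit.
Unset Printing Implicit Defensive.

Import Order.TTheory GRing.Theory Num.Theory.
Import numFieldNormedType.Exports.
Local Open Scope classical_set_scope.
Local Open Scope ring_scope.

Section Defs.
Variables (R : realType) (d : nat).
Local Notation M := 'M[R]_d.
Local Notation V := 'cV[R]_d.
Local Notation Vs := 'rV[R]_d.

Definition mxpow (g : M) (n : nat) : M := iter n (mulmx g) 1%:M.

Definition subgroup_SL (G : set M) : Prop :=
  [/\ G 1%:M,
      (forall g h, G g -> G h -> G (g *m h)),
      (forall g, G g -> G (invmx g)) &
      (forall g, G g -> \det g = 1)].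

Definition torsion_free (G : set M) : Prop :=
  forall g, G g -> g != 1%:M -> forall n : nat, (0 < n)%N -> mxpow g n != 1%:M.

Definition is_letter (S : seq M) (a : M) : bool := (a \in S) || (invmx a \in S).

Definition word_reach (S : seq M) (g : M) (n : nat) : Prop :=
  exists w : seq M, [/\ size w = n, all (is_letter S) w & foldr mulmx 1%:M w = g].

Definition wordlen (S : seq M) (g : M) : nat :=
  match pselect (exists n, (fun n => `[< word_reach S g n >]) n) with
  | left H => ex_minn H
  | right _ => 0%N
  end.

Definition generates (S : seq M) (G : set M) : Prop :=
  (forall a, a \in S -> G a) /\ (forall g, G g -> exists n, word_reach S g n).

(** Gromov product (x|y)_w in the word metric d(x,y) = |x^-1 y| *)
Definition gprod (S : seq M) (w x y : M) : R :=
  ((wordlen S (invmx w *m x))%:R + (wordlen S (invmx w *m y))%:R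
    - (wordlen S (invmx x *m y))%:R) / 2.

Definition gprod0 (S : seq M) (x y : M) : R := gprod S 1%:M x y.

Definition hyperbolic_group (S : seq M) (G : set M) : Prop :=
  exists delta : R, 0 <= delta /\
    forall w x y z, G w -> G x -> G y -> G z ->
      Num.min (gprod S w x y) (gprod S w y z) - delta <= gprod S w x z.

Definition tends_infty2 (f : nat -> nat -> R) : Prop :=
  forall B : R, exists N : nat, forall m n, (N <= m)%N -> (N <= n)%N -> B <= f m n.

(** Gromov boundary: sequences in G converging at infinity, up to equivalence *)
Definition bd_point (S : seq M) (G : set M) (a : nat -> M) : Prop :=
  (forall n, G (a n)) /\ tends_infty2 (fun m n => gprod0 S (a m) (a n)).

Definition bd_equiv (S : seq M) (a b : nat -> M) : Prop :=
  tends_infty2 (fun m n => gprod0 S (a m) (b n)).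

Definition seq_to_bd (S : seq M) (g : nat -> M) (a : nat -> M) : Prop :=
  tends_infty2 (fun k n => gprod0 S (g k) (a n)).

Definition bd_conv (S : seq M) (x : nat -> nat -> M) (a : nat -> M) : Prop :=
  forall B : R, exists K : nat, forall k, (K <= k)%N ->
    exists N : nat, forall m n, (N <= m)%N -> (N <= n)%N -> B <= gprod0 S (x k m) (a n).

(** projective lines: nonzero vectors up to nonzero scalars *)
Definition same_line (m n : nat) (u v : 'M[R]_(m, n)) : Prop :=
  exists c : R, c != 0 /\ u = c *: v.

(** eigenvalues: complex roots (with multiplicity) of the characteristic polynomial *)
Definition toC (x : R) : complex.complex R := complex.Complex x 0.
Definition modC (z : complex.complex R) : R :=
  Num.sqrt (complex.Re z ^+ 2 + complex.Im z ^+ 2).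

Definition eig_seq (g : M) (s : seq (complex.complex R)) : Prop :=
  map_poly toC (char_poly g) = \prod_(z <- s) ('X - z%:P).

Definition top_modulus (g : M) (mu : R) : Prop :=
  forall s, eig_seq g s -> forall z, z \in s -> modC z <= `|mu|.

Definition stable_len (S : seq M) (g : M) : R :=
  limn (fun n : nat => ((wordlen S (mxpow g n))%:R / n%:R : R)).

(** lambda_1(g) - lambda_2(g), computed from a list s of eigenvalues *)
Definition lam12 (s : seq (complex.complex R)) : R :=
  let m := sort (fun x y : R => y <= x) (map modC s) in
  ln (nth 0 m 0) - ln (nth 0 m 1).

Definition projective_anosov (S : seq M) (G : set M) : Prop :=
  hyperbolic_group S G /\
  exists c c' : R, 0 < c /\ 0 < c' /\
    forall g, G g -> forall s, eig_seq g s -> c * stable_len S g - c' <= lam12 s.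

(** xi : boundary -> P(V), xis : boundary -> P(dual of V) are the limit maps:
    V = column vectors, dual of V = row vectors, pairing phi(v) = phi *m v,
    dual action g.phi = phi *m g^-1. Boundary points are represented by
    sequences converging at infinity. *)
Definition limit_maps (S : seq M) (G : set M)
    (xi : (nat -> M) -> V) (xis : (nat -> M) -> Vs) : Prop :=
      (forall a, bd_point S G a -> xi a != 0 /\ xis a != 0) /\
      (forall a b, bd_point S G a -> bd_point S G b -> bd_equiv S a b ->
         same_line (xi a) (xi b) /\ same_line (xis a) (xis b)) /\
      (forall g a, G g -> bd_point S G a ->
         same_line (xi (fun n => g *m a n)) (g *m xi a) /\
         same_line (xis (fun n => g *m a n)) (xis a *m invmx g)) /\
      (forall (x : nat -> nat -> M) a, (forall k, bd_point S G (x k)) -> bd_point S G a ->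
         bd_conv S x a ->
         (exists w : nat -> V, (forall k, same_line (w k) (xi (x k))) /\ w @ \oo --> xi a) /\
         (exists w : nat -> Vs, (forall k, same_line (w k) (xis (x k))) /\ w @ \oo --> xis a)) /\
      (forall a b, bd_point S G a -> bd_point S G b ->
         (xis b *m xi a = 0 <-> bd_equiv S a b)) /\
      (* dynamics preserving: xi(g_+) top eigenline of g, xis(g_-) top eigenline of
         the dual (transpose) action of g; g_+ = [g^n], g_- = [g^-n] *)
      (forall g, G g -> (forall n, (0 < n)%N -> mxpow g n != 1%:M) ->
         (exists mu : R, g *m xi (mxpow g) = mu *: xi (mxpow g) /\ top_modulus g mu) /\
         (exists mu : R, xis (mxpow (invmx g)) *m g = mu *: xis (mxpow (invmx g))
                         /\ top_modulus g mu)).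

End Defs.

(* Main.v *)
Require Import Defs.
From HB Require Import structures.
From mathcomp Require Import all_boot all_order all_algebra.
From mathcomp Require Import all_classical all_reals all_analysis.
From mathcomp Require Import complex.
From mathcomp Require Import ring lra.

Import Order.TTheory GRing.Theory Num.Theory.
Import numFieldNormedType.Exports.
Local Open Scope classical_set_scope.
Local Open Scope ring_scope.
Set Implicit Arguments.
Unset Strict Implicit.

Lemma invmxM' (R : realType) (d : nat) (A B : 'M[R]_d) :
  A \in unitmx -> B \in unitmx -> invmx (A *m B) = invmx B *m invmx A.
Proof.
move=> uA uB.
have uAB : A *m B \in unitmx by rewrite unitmx_mul uA uB.
have e : (A *m B) *m (invmx B *m invmx A) = 1%:M.
  by rewrite -mulmxA (mulmxA B) mulmxV // mul1mx mulmxV.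
by rewrite -[LHS]mulmx1 -e mulmxA mulVmx // mul1mx.
Qed.

Lemma SL_unit (R : realType) (d : nat) (G : set 'M[R]_d) g :
  subgroup_SL G -> G g -> g \in unitmx.
Proof. by case=> _ _ _ hdet /hdet hg; rewrite unitmxE hg unitr1. Qed.

Lemma letter_G (R : realType) (d : nat) (G : set 'M[R]_d) S a :
  subgroup_SL G -> generates S G -> is_letter S a -> G a /\ a \in unitmx.
Proof.
move=> hG [hS _] /orP[aS|iaS].
  by have Ga := hS _ aS; split=> //; exact: SL_unit hG Ga.
have Gi := hS _ iaS.
have ui := SL_unit hG Gi.
have ua : a \in unitmx by rewrite -unitmx_inv.
split=> //; rewrite -(invmxK a); case: hG => _ _ hinv _; exact: hinv.
Qed.

Lemma wordlenP (R : realType) (d : nat) (S : seq 'M[R]_d) g :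
  (exists n, word_reach S g n) ->
  word_reach S g (wordlen S g) /\ forall n, word_reach S g n -> (wordlen S g <= n)%N.
Proof.
move=> ex; rewrite /wordlen; case: pselect => [H|H]; last first.
  by exfalso; apply: H; case: ex => n hn; exists n; exact/asboolP.
case: (ex_minnP H) => m /asboolP Pm minm; split=> // n hn.
by apply: minm; exact/asboolP.
Qed.

Lemma wordlen_le (R : realType) (d : nat) (S : seq 'M[R]_d) g n :
  word_reach S g n -> (wordlen S g <= n)%N.
Proof. by move=> h; have [_ ] := wordlenP (ex_intro _ n h); apply. Qed.

Lemma foldr_cat_mx (R : realType) (d : nat) (w1 w2 : seq 'M[R]_d) :
  foldr mulmx 1%:M (w1 ++ w2) = foldr mulmx 1%:M w1 *m foldr mulmx 1%:M w2.
Proof. by elim: w1 => [|a w IH] /=; rewrite ?mul1mx // IH mulmxA. Qed.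

Lemma reach_G (R : realType) (d : nat) (G : set 'M[R]_d) S g :
  generates S G -> G g -> exists n, word_reach S g n.
Proof. by case=> _ h /h. Qed.

Lemma wordlen_mul (R : realType) (d : nat) (G : set 'M[R]_d) S x y :
  generates S G -> G x -> G y ->
  (wordlen S (x *m y) <= wordlen S x + wordlen S y)%N.
Proof.
move=> hgen Gx Gy.
have [[w1 [s1 a1 f1]] _] := wordlenP (reach_G hgen Gx).
have [[w2 [s2 a2 f2]] _] := wordlenP (reach_G hgen Gy).
apply: wordlen_le; exists (w1 ++ w2); split.
- by rewrite size_cat s1 s2.
- by rewrite all_cat a1 a2.
- by rewrite foldr_cat_mx f1 f2.
Qed.

Lemma wordlen_inv_le (R : realType) (d : nat) (G : set 'M[R]_d) S x :
  subgroup_SL G -> generates S G -> G x ->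
  (wordlen S (invmx x) <= wordlen S x)%N.
Proof.
move=> hG hgen Gx.
have [[w [sw aw fw]] _] := wordlenP (reach_G hgen Gx).
apply: wordlen_le; exists (rev (map invmx w)); split.
- by rewrite size_rev size_map.
- rewrite all_rev all_map; apply/allP => a ain /=.
  have la := allP aw a ain.
  have [_ ua] := letter_G hG hgen la.
  by move: la; rewrite /is_letter /= invmxK orbC.
- rewrite -fw; elim: w aw {sw fw} => [|a w IH] /=; first by rewrite invmx1.
  move=> /andP[la aw]; rewrite rev_cons -cats1 foldr_cat_mx /= IH //.
  have [_ ua] := letter_G hG hgen la.
  have uw : foldr mulmx 1%:M w \in unitmx.
    elim: w aw {IH} => [|b w' IH'] /=; first by rewrite unitmx1.
    move=> /andP[lb aw']; rewrite unitmx_mul IH' // andbT.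
    by have [] := letter_G hG hgen lb.
  by rewrite invmxM' // mulmx1.
Qed.

Lemma wordlen_inv (R : realType) (d : nat) (G : set 'M[R]_d) S x :
  subgroup_SL G -> generates S G -> G x ->
  wordlen S (invmx x) = wordlen S x.
Proof.
move=> hG hgen Gx; apply/eqP; rewrite eqn_leq (wordlen_inv_le hG hgen Gx) /=.
have Gi : G (invmx x) by case: hG => _ _ hi _; exact: hi.
by have := wordlen_inv_le hG hgen Gi; rewrite invmxK.
Qed.

Lemma wordlen1 (R : realType) (d : nat) (S : seq 'M[R]_d) :
  wordlen S 1%:M = 0%N.
Proof.
by apply/eqP; rewrite -leqn0; apply: wordlen_le; exists [::].
Qed.

Definition lenR (R : realType) (d : nat) (S : seq 'M[R]_d) (g : 'M[R]_d) : R :=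
  (wordlen S g)%:R.

Lemma G_mul (R : realType) (d : nat) (G : set 'M[R]_d) x y :
  subgroup_SL G -> G x -> G y -> G (x *m y).
Proof. by case=> _ h _ _; apply: h. Qed.

Lemma G_inv (R : realType) (d : nat) (G : set 'M[R]_d) x :
  subgroup_SL G -> G x -> G (invmx x).
Proof. by case=> _ _ h _; apply: h. Qed.

Lemma G_one (R : realType) (d : nat) (G : set 'M[R]_d) :
  subgroup_SL G -> G 1%:M.
Proof. by case. Qed.

Lemma lenR_ge0 (R : realType) (d : nat) (S : seq 'M[R]_d) g : 0 <= lenR S g.
Proof. exact: ler0n. Qed.

Lemma lenR_mul (R : realType) (d : nat) (G : set 'M[R]_d) S x y :
  generates S G -> G x -> G y -> lenR S (x *m y) <= lenR S x + lenR S y.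
Proof. by move=> hg Gx Gy; rewrite /lenR -natrD ler_nat (wordlen_mul hg). Qed.

Lemma lenR_inv (R : realType) (d : nat) (G : set 'M[R]_d) S x :
  subgroup_SL G -> generates S G -> G x -> lenR S (invmx x) = lenR S x.
Proof. by move=> hG hg Gx; rewrite /lenR (wordlen_inv hG hg Gx). Qed.

Lemma lenR1 (R : realType) (d : nat) (S : seq 'M[R]_d) : lenR S 1%:M = 0.
Proof. by rewrite /lenR wordlen1. Qed.

Lemma gprodE (R : realType) (d : nat) (S : seq 'M[R]_d) w x y :
  gprod S w x y = (lenR S (invmx w *m x) + lenR S (invmx w *m y)
                   - lenR S (invmx x *m y)) / 2.
Proof. by []. Qed.

Lemma gprod_sym (R : realType) (d : nat) (G : set 'M[R]_d) S w x y :
  subgroup_SL G -> generates S G -> G x -> G y ->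
  gprod S w x y = gprod S w y x.
Proof.
move=> hG hg Gx Gy; rewrite !gprodE.
have e : invmx (invmx x *m y) = invmx y *m x.
  by rewrite invmxM' ?invmxK // ?unitmx_inv; apply: (SL_unit hG).
rewrite -e (lenR_inv hG hg); last by apply: G_mul => //; exact: G_inv.
by rewrite (addrC (lenR S (invmx w *m x))).
Qed.

Lemma gprod0_le (R : realType) (d : nat) (G : set 'M[R]_d) S x y :
  subgroup_SL G -> generates S G -> G x -> G y ->
  gprod0 S x y <= lenR S x.
Proof.
move=> hG hg Gx Gy; rewrite /gprod0 gprodE invmx1 !mul1mx.
have ux := SL_unit hG Gx.
have hy : lenR S y <= lenR S x + lenR S (invmx x *m y).
  have := lenR_mul hg Gx (G_mul hG (G_inv hG Gx) Gy).
  by rewrite mulmxA mulmxV // mul1mx.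
rewrite ler_pdivrMr //; lra.
Qed.


Lemma mxpowS (R : realType) (d : nat) (g : 'M[R]_d) n :
  mxpow g n.+1 = g *m mxpow g n.
Proof. by []. Qed.

Lemma mxpow0 (R : realType) (d : nat) (g : 'M[R]_d) : mxpow g 0 = 1%:M.
Proof. by []. Qed.

Lemma mxpowD (R : realType) (d : nat) (g : 'M[R]_d) m n :
  mxpow g (m + n) = mxpow g m *m mxpow g n.
Proof. by elim: m => [|m IH]; rewrite ?mul1mx // addSn mxpowS IH mxpowS mulmxA. Qed.

Lemma mxpow_G (R : realType) (d : nat) (G : set 'M[R]_d) g n :
  subgroup_SL G -> G g -> G (mxpow g n).
Proof.
move=> hG Gg; elim: n => [|n IH]; first exact: G_one.
by rewrite mxpowS; apply: G_mul.
Qed.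

Lemma mxpow_inv (R : realType) (d : nat) (g : 'M[R]_d) n :
  g \in unitmx -> mxpow (invmx g) n = invmx (mxpow g n).
Proof.
move=> ug; have upow k : mxpow g k \in unitmx.
  by elim: k => [|k IH]; rewrite ?unitmx1 // mxpowS unitmx_mul ug IH.
elim: n => [|n IH]; first by rewrite invmx1.
have e : mxpow g n.+1 = mxpow g n *m g.
  by rewrite -addn1 mxpowD /mxpow /= mulmx1.
by rewrite mxpowS IH e invmxM'.
Qed.

Lemma mxpow_unit (R : realType) (d : nat) (g : 'M[R]_d) n :
  g \in unitmx -> mxpow g n \in unitmx.
Proof. by move=> ug; elim: n => [|k IH]; rewrite ?unitmx1 // mxpowS unitmx_mul ug IH. Qed.

Lemma dist_up (R : realType) (d : nat) (G : set 'M[R]_d) S g i j :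
  subgroup_SL G -> G g -> (i <= j)%N ->
  lenR S (invmx (mxpow g i) *m mxpow g j) = lenR S (mxpow g (j - i)).
Proof.
move=> hG Gg hij; have ug := SL_unit hG Gg.
rewrite -{1}(subnKC hij) mxpowD mulmxA mulVmx ?mul1mx //; exact: mxpow_unit.
Qed.

Lemma dist_down (R : realType) (d : nat) (G : set 'M[R]_d) S g i j :
  subgroup_SL G -> generates S G -> G g -> (j <= i)%N ->
  lenR S (invmx (mxpow g i) *m mxpow g j) = lenR S (mxpow g (i - j)).
Proof.
move=> hG hg Gg hij; have ug := SL_unit hG Gg.
rewrite -{1}(subnKC hij) mxpowD invmxM' ?mxpow_unit // -mulmxA mulVmx ?mxpow_unit //.
by rewrite mulmx1 (lenR_inv hG hg) //; exact: mxpow_G.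
Qed.

Definition apow (R : realType) (d : nat) (S : seq 'M[R]_d) g k := lenR S (mxpow g k).

Lemma hyp_pow (R : realType) (d : nat) (G : set 'M[R]_d) S g delta m :
  subgroup_SL G -> generates S G -> G g ->
  (forall w x y z, G w -> G x -> G y -> G z ->
      Num.min (gprod S w x y) (gprod S w y z) - delta <= gprod S w x z) ->
  Num.min ((apow S g 1 + apow S g m.+1 - apow S g m) / 2)
          ((apow S g m.+1 + apow S g 1 - apow S g m.+2) / 2) - delta
    <= (apow S g 1 + apow S g 1 - apow S g 2) / 2.
Proof.
move=> hG hg Gg hyp; rewrite /apow.
have Gp k : G (mxpow g k) by exact: mxpow_G.
have := hyp (mxpow g m.+1) (mxpow g m) (mxpow g 0) (mxpow g m.+2)
  (Gp _) (Gp _) (Gp _) (Gp _).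
rewrite !gprodE.
rewrite (dist_down (i:=m.+1) (j:=m) hG hg Gg (leqnSn m)).
rewrite (dist_down (i:=m.+1) (j:=0) hG hg Gg (leq0n _)).
rewrite (dist_down (i:=m) (j:=0) hG hg Gg (leq0n _)).
rewrite (dist_up _ (i:=m.+1) (j:=m.+2) hG Gg (leqnSn _)).
rewrite (dist_up _ (i:=0) (j:=m.+2) hG Gg (leq0n _)).
rewrite (dist_up _ (i:=m) (j:=m.+2) hG Gg (leq_trans (leqnSn _) (leqnSn _))).
have -> : (m.+2 - m = 2)%N by rewrite -addn2 addKn.
by rewrite !subn0 !subSnn.

Qed.

Lemma quasi (R : realType) (a : nat -> R) L c delta :
  a 1%N = L -> 0 <= c -> 0 <= delta -> L + L - a 2%N <= 2 * c ->
  2 * c + 2 * delta < L ->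
  (forall m, Num.min ((a 1%N + a m.+1 - a m) / 2) ((a m.+1 + a 1%N - a m.+2) / 2)
             - delta <= (a 1%N + a 1%N - a 2%N) / 2) ->
  forall m, a m.+1 + L - a m.+2 <= 2 * c + 2 * delta.
Proof.
move=> a1 c0 d0 h2 hL hyp; elim=> [|m IH]; first by rewrite a1; lra.
have := hyp m.+1; rewrite a1.
have -> : forall x z : R, (x - delta <= z) = (x <= z + delta).
  by move=> x z; rewrite lerBlDr.
rewrite ge_min => /orP[h|h].
  exfalso; move: h IH h2; lra.
move: h h2; lra.
Qed.

Lemma quasi_step (R : realType) (a : nat -> R) L eps :
  a 0%N = 0 -> a 1%N = L -> 0 <= eps ->
  (forall m, a m.+1 + L - a m.+2 <= eps) ->
  forall n, a n + L - eps <= a n.+1.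
Proof.
move=> a0 a1 e0 h [|n]; first by rewrite a0 a1; lra.
by have := h n; lra.
Qed.

Lemma quasi_lin (R : realType) (a : nat -> R) L eps :
  (forall n, a n + L - eps <= a n.+1) ->
  forall n k, a n + k%:R * (L - eps) <= a (n + k)%N.
Proof.
move=> h n; elim=> [|k IH]; first by rewrite mul0r addr0 addn0.
rewrite addnS -natr1 mulrDl mul1r; have := h (n + k)%N; lra.
Qed.

Lemma subadd_lin (R : realType) (a : nat -> R) :
  (forall m n, a (m + n)%N <= a m + a n) ->
  forall q m r, a (q * m + r)%N <= q%:R * a m + a r.
Proof.
move=> sa; elim=> [|q IH] m r; first by rewrite mul0n add0n mul0r add0r.
rewrite mulSn -addnA; apply: le_trans (sa _ _) _.
by rewrite -natr1 mulrDl mul1r; have := IH m r; lra.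
Qed.

Lemma fekete (R : realType) (a : nat -> R) :
  (forall n, 0 <= a n) -> (forall m n, a (m + n)%N <= a m + a n) ->
  cvgn (fun n => a n / n%:R).
Proof.
move=> a0 sa.
pose E := [set x : R | exists2 n, (0 < n)%N & x = a n / n%:R].
have E1 : E (a 1%N / 1%:R) by exists 1%N.
have lbE : lbound E 0.
  by move=> x [n n0 ->]; rewrite divr_ge0.
have hinf : has_inf E by split; [exists (a 1%N / 1%:R) | exists 0].
set l := inf E.
have l0 : 0 <= l by apply: lb_le_inf => //; exists (a 1%N / 1%:R).
apply/cvg_ex; exists l; apply/cvgrPdist_lt => eps eps0.
have e0 : 0 < eps / 2 by rewrite divr_gt0.
have [x [m m0 ->] xlt] := inf_adherent e0 hinf.
have am : a m < (l + eps / 2) * m%:R.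
  by rewrite -ltr_pdivrMr ?ltr0n.
pose K := a 0%N + m%:R * a 1%N.
have aK r : (r < m)%N -> a r <= K.
  move=> rm; rewrite /K.
  have h : forall r, a r <= a 0%N + r%:R * a 1%N.
    elim=> [|k IH]; first by rewrite mul0r addr0.
    rewrite -addn1; apply: le_trans (sa _ _) _; rewrite natrD mulrDl mul1r; lra.
  apply: le_trans (h r) _; rewrite lerD2l; apply: ler_wpM2r; first exact: a0.
  by rewrite ler_nat; exact: ltnW.
have [N NK] : exists N : nat, K < N%:R * (eps / 2).
  exists (Num.bound (K / (eps / 2))).+1.
  have K0 : 0 <= K by rewrite /K addr_ge0 ?mulr_ge0 ?a0.
  rewrite -ltr_pdivrMr //; apply: (lt_le_trans (archi_boundP _)).
    by apply: divr_ge0 => //; exact: ltW.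
  by rewrite ler_nat.
exists (maxn N 1) => // n /= hn.
have n0 : (0 < n)%N by apply: leq_trans hn; rewrite leq_maxr.
have nN : (N <= n)%N by apply: leq_trans hn; rewrite leq_maxl.
have bl : l <= a n / n%:R by apply: ge_inf => //; [exists 0 | exists n].
rewrite distrC ger0_norm ?subr_ge0 // ltrBlDl.
have n0R : 0 < n%:R :> R by rewrite ltr0n.
rewrite ltr_pdivrMr //.
have dq := divn_eq n m.
have rm : (n %% m < m)%N by rewrite ltn_pmod.
have h1 : a n <= (n %/ m)%:R * a m + K.
  rewrite {1}dq; apply: le_trans (subadd_lin sa _ _ _) _.
  by rewrite lerD2l; exact: aK.
have qm : (n %/ m)%:R * m%:R <= n%:R :> R.
  by rewrite -natrM ler_nat {2}dq leq_addr.
have h2 : (n %/ m)%:R * a m <= (l + eps / 2) * n%:R.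
  apply: le_trans (_ : (n %/ m)%:R * ((l + eps / 2) * m%:R) <= _).
    by apply: ler_wpM2l => //; exact: ltW.
  rewrite mulrCA; apply: ler_wpM2l; first by rewrite addr_ge0 // ltW.
  exact: qm.
have h3 : K < n%:R * (eps / 2).
  apply: lt_le_trans NK _; apply: ler_wpM2r; first exact: ltW.
  by rewrite ler_nat.
have -> : (l + eps) * n%:R = (l + eps / 2) * n%:R + n%:R * (eps / 2).
  by field.
apply: le_lt_trans h1 _; apply: ler_ltD => //.
Qed.

Lemma lim_lower (R : realType) (a : nat -> R) b :
  (forall n, 0 <= a n) -> (forall m n, a (m + n)%N <= a m + a n) ->
  (forall n, n%:R * b <= a n) -> b <= limn (fun n => a n / n%:R).
Proof.
move=> a0 sa hb; apply: limr_ge; first exact: fekete.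
exists 1%N => // n /= hn; rewrite ler_pdivlMr ?ltr0n // mulrC; exact: hb.
Qed.

Lemma ln_le' (R : realType) (x y : R) : 0 < x -> x <= y -> ln x <= ln y.
Proof.
move=> x0 xy; have y0 : 0 < y by apply: lt_le_trans xy.
by rewrite ler_ln ?posrE.
Qed.

Lemma prod_le_pow (R : realType) (t : seq R) c :
  (forall y, y \in t -> 0 <= y <= c) -> 0 <= \prod_(y <- t) y <= c ^+ size t.
Proof.
elim: t => [|y t IH] h; first by rewrite big_nil expr0 ler01 lexx.
rewrite big_cons /= exprS.
have /andP[y0 yc] := h y (mem_head _ _).
have /andP[p0 pc] : 0 <= \prod_(y <- t) y <= c ^+ size t.
  by apply: IH => z zt; apply: h; rewrite in_cons zt orbT.
by rewrite mulr_ge0 //=; apply: ler_pM.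
Qed.

Lemma sorted_lam (R : realType) (x : seq R) T :
  (1 < size x)%N -> \prod_(y <- x) y = 1 -> (forall y, y \in x -> 0 <= y <= T) ->
  ln (nth 0 (sort (fun x y : R => y <= x) x) 0)
    - ln (nth 0 (sort (fun x y : R => y <= x) x) 1) <= 2 * ln T.
Proof.
move=> sx px hx; set m := sort _ x.
have pm : perm_eq m x by rewrite /m perm_sort.
have sm : sorted (fun x y : R => y <= x) m.
  by apply: sort_sorted => a b; exact: le_total.
have szm : size m = size x by apply: perm_size.
have prm : \prod_(y <- m) y = 1 by rewrite (perm_big _ pm).
have hm y : y \in m -> 0 <= y <= T by rewrite (perm_mem pm); exact: hx.
clearbody m; move: sm prm hm szm; clear pm; case: m => [|m0 [|m1 t]] /=.
- by move=> _ _ _ e; move: sx; rewrite -e.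
- by move=> _ _ _ e; move: sx; rewrite -e.
move=> /andP[m10 pt] prm hm _.
have ht : all (fun y => y <= m1) t.
  by apply: (order_path_min _ pt) => a b c ab bc; exact: le_trans bc ab.
rewrite !big_cons in prm.
have /andP[m00 m0T] := hm m0 (mem_head _ _).
have /andP[m1_0 m1T] : 0 <= m1 <= T by apply: hm; rewrite !in_cons eqxx orbT.
have /andP[P0 Pm] : 0 <= \prod_(y <- t) y <= m1 ^+ size t.
  apply: prod_le_pow => y yt; rewrite (allP ht y yt) andbT.
  have : 0 <= y <= T by apply: hm; rewrite !in_cons yt !orbT.
  by case/andP.
have m1pos : 0 < m1.
  rewrite lt_neqAle m1_0 andbT; apply/eqP => e; move: prm; rewrite -e.
  by rewrite mul0r mulr0 => /eqP; rewrite eq_sym oner_eq0.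
have m0pos : 0 < m0 by apply: lt_le_trans m10.
have lnm0T : ln m0 <= ln T by apply: ln_le'.
case: (leP 1 m1) => h1.
  have : 0 <= ln m1 by rewrite -(ln1 R); apply: ln_le'.
  have : ln m1 <= ln m0 by apply: ln_le'.
  lra.
have : 1 <= m0 * m1.
  rewrite -{1}prm mulrA; apply: ler_piMr; first by rewrite mulr_ge0 // ltW.
  apply: le_trans Pm _; apply: exprn_ile1 => //; exact: ltW.
move=> h01.
have : 0 <= ln m0 + ln m1.
  by rewrite -lnM ?posrE // -(ln1 R); apply: ln_le'.
have : ln m1 <= ln m0 by apply: ln_le'.
lra.
Qed.

Lemma toC_map (R : realType) (p : {poly R}) :
  map_poly (@toC R) p = map_poly (real_complex R) p.
Proof. by []. Qed.

Lemma eig_exists (R : realType) (d : nat) (g : 'M[R]_d) : exists s, eig_seq g s.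
Proof.
have [r hr] := closed_field_poly_normal (map_poly (@toC R) (char_poly g)).
exists r; rewrite /eig_seq {1}hr toC_map lead_coef_map.
by rewrite (monicP (char_poly_monic g)) rmorph1 scale1r.
Qed.

Lemma modC_ge0 (R : realType) (z : R[i]) : 0 <= modC z.
Proof. by rewrite /modC sqrtr_ge0. Qed.

Lemma modC_norm (R : realType) (z : R[i]) : `|z| = (modC z)%:C%C.
Proof. by rewrite normc_def. Qed.

Lemma eig_props (R : realType) (d : nat) (g : 'M[R]_d) s :
  \det g = 1 -> eig_seq g s -> size s = d /\ \prod_(z <- s) modC z = 1.
Proof.
rewrite /eig_seq toC_map => dg e; split.
  have := size_prod_XsubC s id; rewrite -e size_map_poly size_char_poly.
  by case.
have := congr1 (fun p => p.[0]) e.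
rewrite -(rmorph0 (real_complex R)) horner_map horner_prod horner_coef0 char_poly_det dg.
rewrite mulr1 => /(congr1 (fun z => `|z|)).
rewrite normr_prod rmorphXn rmorphN rmorph1 normrX normrN normr1 expr1n.
under eq_bigr do rewrite hornerXsubC sub0r normrN modC_norm.
by rewrite -rmorph_prod => /esym/complexI.
Qed.

Lemma lam12_top (R : realType) (d : nat) (g : 'M[R]_d) s mu :
  (1 < d)%N -> \det g = 1 -> eig_seq g s -> top_modulus g mu ->
  lam12 s <= 2 * ln `|mu|.
Proof.
move=> d1 dg e tm; have [sz pr] := eig_props dg e.
rewrite /lam12; apply: sorted_lam.
- by rewrite size_map sz.
- by rewrite big_map.
- move=> y /mapP [z zs ->]; rewrite modC_ge0 /=; exact: tm e z zs.
Qed.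

Definition hypd (R : realType) (d : nat) (S : seq 'M[R]_d) (G : set 'M[R]_d) delta :=
  forall w x y z, G w -> G x -> G y -> G z ->
    Num.min (gprod S w x y) (gprod S w y z) - delta <= gprod S w x z.

Lemma apow0 (R : realType) (d : nat) (S : seq 'M[R]_d) g : apow S g 0 = 0.
Proof. by rewrite /apow mxpow0 lenR1. Qed.

Lemma apow1 (R : realType) (d : nat) (S : seq 'M[R]_d) g : apow S g 1 = lenR S g.
Proof. by rewrite /apow /mxpow /= mulmx1. Qed.

Lemma apow_inv (R : realType) (d : nat) (G : set 'M[R]_d) S g n :
  subgroup_SL G -> generates S G -> G g ->
  apow S (invmx g) n = apow S g n.
Proof.
move=> hG hg Gg; rewrite /apow mxpow_inv ?(SL_unit hG) // (lenR_inv hG hg) //.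
exact: mxpow_G.
Qed.

Lemma gp0_inv (R : realType) (d : nat) (G : set 'M[R]_d) S g :
  subgroup_SL G -> generates S G -> G g ->
  gprod0 S g (invmx g) = (lenR S g + lenR S g - apow S g 2) / 2.
Proof.
move=> hG hg Gg; rewrite /gprod0 gprodE invmx1 !mul1mx (lenR_inv hG hg Gg).
have ug := SL_unit hG Gg.
rewrite -invmxM' // (lenR_inv hG hg (G_mul hG Gg Gg)).
by rewrite /apow /mxpow /= mulmx1.
Qed.

Lemma step_facts (R : realType) (d : nat) (G : set 'M[R]_d) S g delta c :
  subgroup_SL G -> generates S G -> G g -> hypd S G delta ->
  0 <= delta -> 0 <= c ->
  lenR S g + lenR S g - apow S g 2 <= 2 * c ->
  2 * c + 2 * delta + 1 <= lenR S g ->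
  forall n, apow S g n + lenR S g - (2 * c + 2 * delta) <= apow S g n.+1.
Proof.
move=> hG hg Gg hyp d0 c0 h2 hL.
apply: quasi_step; rewrite ?apow0 ?apow1 //; first by rewrite addr_ge0 ?mulr_ge0.
apply: (quasi (a := apow S g) (L := lenR S g) (c:=c) (delta:=delta)) => //;
  rewrite ?apow1 //.
  apply: lt_le_trans hL; rewrite ltrDl; exact: ltr01.
move=> m; have := hyp_pow m hG hg Gg hyp; rewrite apow1; exact.
Qed.

Lemma nat_above (R : realType) (B : R) : exists N : nat, B <= N%:R.
Proof.
exists (Num.bound `|B|); apply: le_trans (ler_norm B) _.
by apply: ltW; apply: archi_boundP.
Qed.

Lemma good_lin (R : realType) (d : nat) (S : seq 'M[R]_d) g eps :
  (forall n, apow S g n + lenR S g - eps <= apow S g n.+1) ->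
  forall n k, apow S g n + k%:R * (lenR S g - eps) <= apow S g (n + k)%N.
Proof. move=> hs; apply: quasi_lin => n; exact: hs. Qed.

Lemma good_lower (R : realType) (d : nat) (S : seq 'M[R]_d) g eps :
  (forall n, apow S g n + lenR S g - eps <= apow S g n.+1) ->
  forall n, n%:R * (lenR S g - eps) <= apow S g n.
Proof.
move=> hs n; have := good_lin hs 0 n; by rewrite apow0 add0r add0n.
Qed.

Lemma good_stable (R : realType) (d : nat) (G : set 'M[R]_d) S g eps :
  subgroup_SL G -> generates S G -> G g ->
  (forall n, apow S g n + lenR S g - eps <= apow S g n.+1) ->
  lenR S g - eps <= stable_len S g.
Proof.
move=> hG hg Gg hs; rewrite /stable_len.
apply: (lim_lower (a := fun n => apow S g n)).
- by move=> n; exact: lenR_ge0.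
- move=> m n; rewrite /apow mxpowD; apply: lenR_mul hg _ _; exact: mxpow_G.
- exact: good_lower hs.
Qed.

Lemma good_notors (R : realType) (d : nat) (S : seq 'M[R]_d) g eps :
  (forall n, apow S g n + lenR S g - eps <= apow S g n.+1) ->
  1 <= lenR S g - eps ->
  forall n, (0 < n)%N -> mxpow g n != 1%:M.
Proof.
move=> hs he n n0; apply/eqP => e.
have := good_lower hs n; rewrite /apow e lenR1.
have : 1 <= n%:R :> R by rewrite ler1n.
move=> h1 h2; have h3 : n%:R <= n%:R * (lenR S g - eps).
  by rewrite -{1}[n%:R]mulr1; apply: ler_wpM2l => //; apply: le_trans h1.
lra.
Qed.

Lemma good_gp (R : realType) (d : nat) (G : set 'M[R]_d) S g eps m n :
  subgroup_SL G -> generates S G -> G g ->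
  (forall n, apow S g n + lenR S g - eps <= apow S g n.+1) ->
  (m <= n)%N -> m%:R * (lenR S g - eps) <= gprod0 S (mxpow g m) (mxpow g n).
Proof.
move=> hG hg Gg hs mn.
rewrite /gprod0 gprodE invmx1 !mul1mx (dist_up _ hG Gg mn).
have h1 := good_lin hs (n - m) m; rewrite subnK // in h1.
have h2 := good_lower hs m.
rewrite -/(apow S g m) -/(apow S g n) -/(apow S g (n - m)).
lra.
Qed.

Lemma good_bdp (R : realType) (d : nat) (G : set 'M[R]_d) S g eps :
  subgroup_SL G -> generates S G -> G g ->
  (forall n, apow S g n + lenR S g - eps <= apow S g n.+1) ->
  1 <= lenR S g - eps -> bd_point S G (mxpow g).
Proof.
move=> hG hg Gg hs he; split; first by move=> n; exact: mxpow_G.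
move=> B; have [N hN] := nat_above B; exists N => m n hm hn /=.
have key k : (N <= k)%N -> B <= k%:R * (lenR S g - eps).
  move=> hk; apply: (le_trans hN); apply: le_trans (_ : k%:R <= _).
    by rewrite ler_nat.
  by rewrite -[X in X <= _]mulr1; apply: ler_wpM2l => //.
case: (leqP m n) => mn.
  by apply: le_trans (key m hm) _; exact: (good_gp hG hg Gg hs).
rewrite /gprod0 (gprod_sym _ hG hg (mxpow_G m hG Gg) (mxpow_G n hG Gg)).
by apply: le_trans (key n hn) _; apply: (good_gp hG hg Gg hs); exact: ltnW.
Qed.

Lemma good_gp1 (R : realType) (d : nat) (G : set 'M[R]_d) S g eps m :
  subgroup_SL G -> generates S G -> G g ->
  (forall n, apow S g n + lenR S g - eps <= apow S g n.+1) ->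
  lenR S g - eps / 2 <= gprod0 S (mxpow g m.+1) g.
Proof.
move=> hG hg Gg hs.
have e1 : mxpow g 1 = g by rewrite /mxpow /= mulmx1.
rewrite -[X in gprod0 _ _ X]e1 /gprod0 gprodE invmx1 !mul1mx.
rewrite (dist_down hG hg Gg (_ : (1 <= m.+1)%N)) // subn1 /=.
have := hs m; rewrite -/(apow S g m.+1) -/(apow S g 1) -/(apow S g m) apow1.
lra.
Qed.

Lemma len_large (R : realType) (d : nat) (G : set 'M[R]_d) S gam gplus :
  subgroup_SL G -> generates S G -> (forall k, G (gam k)) ->
  bd_point S G gplus -> seq_to_bd S gam gplus ->
  forall B, exists N, forall k, (N <= k)%N -> B <= lenR S (gam k).
Proof.
move=> hG hg Gk [Gp _] hs B; have [N hN] := hs B; exists N => k hk.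
have := hN k N hk (leqnn N); rewrite /= => h.
apply: le_trans h _; exact: (gprod0_le hG hg (Gk k) (Gp N)).
Qed.

Lemma gam_bound (R : realType) (d : nat) (G : set 'M[R]_d) S gam gplus gminus delta :
  subgroup_SL G -> generates S G -> hypd S G delta -> 0 <= delta ->
  (forall k, G (gam k)) ->
  bd_point S G gplus -> bd_point S G gminus -> ~ bd_equiv S gplus gminus ->
  seq_to_bd S gam gplus -> seq_to_bd S (fun k => invmx (gam k)) gminus ->
  exists c N, 0 <= c /\ forall k, (N <= k)%N ->
    lenR S (gam k) + lenR S (gam k) - apow S (gam k) 2 <= 2 * c.
Proof.
move=> hG hg hyp d0 Gk [Gp _] [Gm _] hneq hsp hsm.
have [B0 hB0] : exists B0, forall N, exists m n,
    [/\ (N <= m)%N, (N <= n)%N & gprod0 S (gplus m) (gminus n) < B0].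
  apply: contrapT => hne; apply: hneq => B.
  apply: contrapT => hN; apply: hne; exists B => N.
  apply: contrapT => hmn; apply: hN; exists N => m n hm hn /=.
  rewrite leNgt; apply/negP => hlt; apply: hmn; exists m, n; by split.
set B1 := B0 + 2 * delta.
have [Na hNa] := hsp B1; have [Nb hNb] := hsm B1.
have [m' [n' [hm' hn' hlt]]] := hB0 (maxn Na Nb).
exists (Num.max B1 0), (maxn Na Nb); split; first by rewrite le_max lexx orbT.
move=> k hk; set g := gam k.
have Gg : G g by exact: Gk.
have Gi : G (invmx g) by exact: G_inv.
have lt1 : gprod0 S g (invmx g) < B1.
  rewrite ltNge; apply/negP => hge.
  have h1 : B1 <= gprod0 S (gplus m') g.
    rewrite /gprod0 (gprod_sym _ hG hg (Gp m') Gg).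
    by apply: hNa; [exact: leq_trans (leq_maxl _ _) hk | exact: leq_trans (leq_maxl _ _) hm'].
  have h2 : B1 <= gprod0 S (invmx g) (gminus n').
    by apply: hNb; [exact: leq_trans (leq_maxr _ _) hk | exact: leq_trans (leq_maxr _ _) hn'].
  have Gone := G_one hG.
  have h3 := hyp _ _ _ _ Gone (Gp m') Gg Gi.
  have h4 := hyp _ _ _ _ Gone (Gp m') Gi (Gm n').
  rewrite /gprod0 in h1 h2 hge hlt.
  have m3 : B1 <= Num.min (gprod S 1%:M (gplus m') g) (gprod S 1%:M g (invmx g)).
    by rewrite le_min h1 hge.
  have h5 : B1 - delta <= gprod S 1%:M (gplus m') (invmx g) by lra.
  have m4 : B1 - delta <= Num.min (gprod S 1%:M (gplus m') (invmx g))
                            (gprod S 1%:M (invmx g) (gminus n')).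
    by rewrite le_min h5 /=; lra.
  have eB : B1 = B0 + 2 * delta by [].
  lra.
move: lt1; rewrite (gp0_inv hG hg Gg) => lt1.
have : B1 <= Num.max B1 0 by rewrite le_max lexx.
lra.
Qed.

Lemma entry_le (R : realType) m n (x : 'M[R]_(m, n)) i j : `|x i j| <= `|x|.
Proof.
by rewrite [leRHS]/Num.norm /= mx_normrE; apply/bigmax_geP; right => /=; exists (i, j).
Qed.

Lemma mx11_bound (R : realType) d (A : 'rV[R]_d) (B : 'cV[R]_d) :
  `|(A *m B) 0 0| <= d%:R * (`|A| * `|B|).
Proof.
rewrite mxE; apply: le_trans (ler_norm_sum _ _ _) _.
apply: le_trans (_ : \sum_(i < d) (`|A| * `|B|) <= _).
  apply: ler_sum => i _; rewrite normrM; apply: ler_pM => //; exact: entry_le.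
by rewrite sumr_const card_ord mulr_natl.
Qed.

Lemma eig_trans (R : realType) d (w xi0 : 'rV[R]_d) (g : 'M[R]_d) (v : 'cV[R]_d) c mu :
  w = c *: xi0 -> xi0 *m g = mu *: xi0 -> w *m (g *m v) = mu *: (w *m v).
Proof.
move=> -> e; rewrite -!scalemxAl mulmxA e -scalemxAl !scalerA.
by rewrite mulrC.
Qed.

Lemma near_oo (P : nat -> Prop) :
  (\forall k \near \oo, P k) -> exists N, forall k, (N <= k)%N -> P k.
Proof. by case=> N _ hN; exists N => k hk; apply: hN. Qed.

Lemma mx11B (R : realType) (A B : 'M[R]_1) : (A - B) 0 0 = A 0 0 - B 0 0.
Proof. by rewrite !mxE. Qed.

Lemma final_est (R : realType) d (w : nat -> 'rV[R]_d) (X : 'rV[R]_d)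
    (v_ : nat -> 'cV[R]_d) (v : 'cV[R]_d) M :
  w @ \oo --> X -> v_ @ \oo --> v -> (X *m v) 0 0 != 0 ->
  exists T N, forall k, (N <= k)%N -> forall (mu : R) (u : 'cV[R]_d),
    `|u| <= M -> w k *m u = mu *: (w k *m v_ k) -> `|mu| <= T.
Proof.
move=> hw hv hF.
set F0 := `|(X *m v) 0 0|.
have F0p : 0 < F0 by rewrite normr_gt0.
set D := d%:R * (`|v| + 1 + `|X|) + 1.
have D1 : 1 <= D by rewrite lerDr mulr_ge0 // !addr_ge0.
have Dp : 0 < D by apply: lt_le_trans D1; exact: ltr01.
set eta := Num.min 1 (F0 / (2 * D)).
have etap : 0 < eta by rewrite lt_min ltr01 divr_gt0 // mulr_gt0.
have /cvgrPdist_lt hw2 := hw.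
have /cvgrPdist_lt hv2 := hv.
have [N1 hN1] := near_oo (hw2 eta etap).
have [N2 hN2] := near_oo (hv2 eta etap).
exists (2 * d%:R * (`|X| + 1) * M / F0), (maxn N1 N2) => k hk mu u hu e.
have k1 : (N1 <= k)%N by apply: leq_trans (leq_maxl _ _) hk.
have k2 : (N2 <= k)%N by apply: leq_trans (leq_maxr _ _) hk.
have hw1 := hN1 k k1; have hv1 := hN2 k k2; rewrite /= in hw1 hv1.
have eta1 : eta <= 1 by rewrite ge_min lexx.
have eta2 : eta <= F0 / (2 * D) by rewrite ge_min lexx orbT.
have nw : `|w k| <= `|X| + 1.
  have : `|w k| <= `|X| + `|w k - X| by rewrite -{1}(subrKC X (w k)) ler_normD.
  rewrite distrC in hw1; lra.
have nv : `|v_ k| <= `|v| + 1.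
  have : `|v_ k| <= `|v| + `|v_ k - v| by rewrite -{1}(subrKC v (v_ k)) ler_normD.
  rewrite distrC in hv1; lra.
have dec : (w k *m v_ k) 0 0 = (X *m v) 0 0 + ((w k - X) *m v_ k) 0 0
                                 + (X *m (v_ k - v)) 0 0.
  by rewrite mulmxBl mulmxBr !mx11B; lra.
have b1 := mx11_bound (w k - X) (v_ k).
have b2 := mx11_bound X (v_ k - v).
have dist1 : `|((w k - X) *m v_ k) 0 0| + `|(X *m (v_ k - v)) 0 0| < F0 / 2.
  rewrite distrC in hw1; rewrite distrC in hv1.
  have d0 : 0 <= d%:R :> R by [].
  have e1 : d%:R * (`|w k - X| * `|v_ k|) <= d%:R * (eta * (`|v| + 1)).
    apply: ler_wpM2l => //; apply: ler_pM => //; exact: ltW.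
  have e2 : d%:R * (`|X| * `|v_ k - v|) <= d%:R * (`|X| * eta).
    by apply: ler_wpM2l => //; apply: ler_wpM2l => //; exact: ltW.
  have e3 : d%:R * (eta * (`|v| + 1)) + d%:R * (`|X| * eta) = eta * (D - 1).
    by rewrite /D; ring.
  have e4 : eta * (D - 1) < eta * D by rewrite ltr_pM2l // ltrBlDr ltrDl.
  have e5 : eta * D <= F0 / 2.
    have Dn0 : D != 0 by rewrite gt_eqF.
    have -> : F0 / 2 = F0 / (2 * D) * D by field.
    by apply: ler_wpM2r => //; exact: ltW.
  lra.
have fk : F0 / 2 < `|(w k *m v_ k) 0 0|.
  have eF : (X *m v) 0 0 = (w k *m v_ k) 0 0 - ((w k - X) *m v_ k) 0 0
                           - (X *m (v_ k - v)) 0 0 by rewrite dec; ring.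
  have : F0 <= `|(w k *m v_ k) 0 0| + `|((w k - X) *m v_ k) 0 0|
               + `|(X *m (v_ k - v)) 0 0|.
    rewrite /F0 eF; apply: le_trans (ler_normB _ _) _; rewrite lerD2r.
    exact: ler_normB.
  lra.
have := congr1 (fun A : 'M[R]_1 => `|A 0 0|) e; rewrite /= [in X in _ = X]mxE normrM.
have b3 := mx11_bound (w k) u.
have nwu : d%:R * (`|w k| * `|u|) <= d%:R * ((`|X| + 1) * M).
  apply: ler_wpM2l => //; apply: ler_pM => //.
move=> h; have M0 : 0 <= M by apply: le_trans hu.
have h5 : `|mu| * (F0 / 2) <= `|mu| * `|(w k *m v_ k) 0 0|.
  by apply: ler_wpM2l => //; exact: ltW.
have h6 : `|mu| * F0 = 2 * (`|mu| * (F0 / 2)) by field.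
rewrite ler_pdivlMr // h6.
have h7 : 2 * d%:R * (`|X| + 1) * M = 2 * (d%:R * ((`|X| + 1) * M)) by ring.
rewrite h7; lra.
Qed.

Lemma compact_bnd (R : realType) d (K : set 'cV[R]_d) :
  compact K -> exists M : R, forall u, K u -> `|u| <= M.
Proof.
move=> /compact_bounded [M [_ hM]]; exists (M + 1) => u Ku.
by apply: (hM (M + 1)); rewrite ?ltrDl.
Qed.

Unset Implicit Arguments.

Theorem lemma3p2 (R : realType) (d : nat) (G : set 'M[R]_d) (S : seq 'M[R]_d)
    (xi : (nat -> 'M[R]_d) -> 'cV[R]_d) (xis : (nat -> 'M[R]_d) -> 'rV[R]_d)
    (gam : nat -> 'M[R]_d) (gplus gminus : nat -> 'M[R]_d)
    (v_ : nat -> 'cV[R]_d) (v : 'cV[R]_d) :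
  (1 < d)%N ->
  subgroup_SL G -> generates S G -> torsion_free G ->
  projective_anosov S G -> limit_maps S G xi xis ->
  (forall k, G (gam k)) ->
  bd_point S G gplus -> bd_point S G gminus -> ~ bd_equiv S gplus gminus ->
  seq_to_bd S gam gplus -> seq_to_bd S (fun k => invmx (gam k)) gminus ->
  v_ @ \oo --> v -> v != 0 -> xis gminus *m v != 0 ->
  forall K : set 'cV[R]_d, compact K -> \forall k \near \oo, ~ K (gam k *m v_ k).
Proof.
move=> d1 hG hgen htf hA hL Gk bdp bdm hneq hsp hsm hv vn0 hxv K cK.
case: hA => [[delta [d0 hyp]] [c0 [c0' [c0p [c0'p hAn]]]]].
case: hL => [hnz [hwd [heq [hcont [htr hdyn]]]]].
have [c [N0 [cpos hc]]] := gam_bound hG hgen hyp d0 Gk bdp bdm hneq hsp hsm.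
set eps := 2 * c + 2 * delta.
have eps0 : 0 <= eps by rewrite /eps addr_ge0 ?mulr_ge0.
have [K1 hK1] := len_large hG hgen Gk bdp hsp (2 * c + 2 * delta + 1).
set K0 := maxn N0 K1.
have Lk k : (K0 <= k)%N -> 1 <= lenR S (gam k) - eps.
  move=> hk; have := hK1 k (leq_trans (leq_maxr _ _) hk); rewrite /eps; clear; lra.
have good k : (K0 <= k)%N ->
    forall n, apow S (gam k) n + lenR S (gam k) - eps <= apow S (gam k) n.+1.
  move=> hk; apply: (step_facts hG hgen (Gk k) hyp d0 cpos).
    exact: hc (leq_trans (leq_maxl _ _) hk).
  exact: hK1 (leq_trans (leq_maxr _ _) hk).
have Gi k : G (invmx (gam k)) by exact: G_inv.
have goodi k : (K0 <= k)%N ->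
    forall n, apow S (invmx (gam k)) n + lenR S (invmx (gam k)) - eps
              <= apow S (invmx (gam k)) n.+1.
  move=> hk n; rewrite !(apow_inv _ hG hgen (Gk k)) (lenR_inv hG hgen (Gk k)).
  exact: good.
pose x j := mxpow (invmx (gam (j + K0)%N)).
have bdx j : bd_point S G (x j).
  have hk : (K0 <= j + K0)%N by rewrite leq_addl.
  apply: (good_bdp hG hgen (Gi _) (goodi _ hk)).
  by rewrite (lenR_inv hG hgen (Gk _)); exact: Lk.
have bcx : bd_conv S x gminus.
  move=> B; have [N1 hN1] := hsm (B + delta).
  have [N2 hN2] := len_large hG hgen Gk bdp hsp (B + delta + eps / 2).
  exists (maxn N1 N2) => j hj; exists (maxn N1 1) => m n hm hn.
  set k := (j + K0)%N.
  have kN1 : (N1 <= k)%N.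
    by apply: leq_trans (leq_maxl _ _) (leq_trans hj _); rewrite leq_addr.
  have kN2 : (N2 <= k)%N.
    by apply: leq_trans (leq_maxr _ _) (leq_trans hj _); rewrite leq_addr.
  have kK0 : (K0 <= k)%N by rewrite leq_addl.
  case: m hm => [|m] hm; first by move: hm; rewrite geq_max ltnn andbF.
  have h1 := good_gp1 m hG hgen (Gi k) (goodi k kK0).
  rewrite (lenR_inv hG hgen (Gk k)) in h1.
  have h2 := hN1 k n kN1 (leq_trans (leq_maxl _ _) hn); rewrite /= in h2.
  have h3 := hN2 k kN2.
  have Gone := G_one hG.
  have h4 := hyp _ _ _ _ Gone (mxpow_G m.+1 hG (Gi k)) (Gi k) (bdm.1 n).
  have m4 : B + delta <= Num.min (gprod0 S (mxpow (invmx (gam k)) m.+1) (invmx (gam k)))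
                            (gprod0 S (invmx (gam k)) (gminus n)).
    by rewrite le_min h2 andbT; clear -h1 h3; lra.
  rewrite /x /=; rewrite /gprod0 in m4 *; clear -m4 h4; lra.
have [[_ _] [w [hsl hw]]] := hcont x gminus bdx bdm bcx.
have [M hM] := compact_bnd cK.
have hv' : (fun j => v_ (j + K0)%N) @ \oo --> v by move: hv; rewrite -(cvg_shiftn K0).
have xv0 : (xis gminus *m v) 0 0 != 0.
  apply: contra hxv => /eqP e; apply/eqP/matrixP => i j.
  by rewrite !ord1 e mxE.
have [T [N3 hT]] := final_est M hw hv' xv0.
set T1 := Num.max T 1.
have T1p : 0 < T1 by rewrite lt_max ltr01 orbT.
have [K2 hK2] := len_large hG hgen Gk bdp hsp (eps + (2 * ln T1 + c0' + 1) / c0).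
exists (maxn (N3 + K0) K2) => // k /= hk Kk.
have kK0 : (K0 <= k)%N.
  by apply: leq_trans (leq_trans (leq_addl _ _) (leq_maxl _ _)) hk.
set j := (k - K0)%N.
have ek : (j + K0)%N = k by rewrite subnK.
have jN3 : (N3 <= j)%N.
  rewrite /j leq_subRL // addnC; exact: leq_trans (leq_maxl _ _) hk.
have kK2 : (K2 <= k)%N by apply: leq_trans (leq_maxr _ _) hk.
have [_ [mu [hmu tm]]] := hdyn (gam k) (Gk k) (good_notors (good k kK0) (Lk k kK0)).
have [cc [_ hcc]] := hsl j.
have ew : w j = cc *: xis (mxpow (invmx (gam k))) by rewrite hcc /x ek.
have hmuT : `|mu| <= T.
  apply: (hT j jN3 mu (gam k *m v_ k)); first exact: hM.
  by rewrite ek; exact: (eig_trans _ ew hmu).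
have [s es] := eig_exists (gam k).
have hdet : \det (gam k) = 1 by case: hG => _ _ _ hd; exact: hd.
have h1 := hAn (gam k) (Gk k) s es.
have h2 := lam12_top d1 hdet es tm.
have h3 := good_stable hG hgen (Gk k) (good k kK0).
have h4 : ln `|mu| <= ln T1.
  have [mu0|mu0] := leP `|mu| 0.
    by rewrite (ln0 mu0) -(ln1 R); apply: ln_le' => //; rewrite le_max lexx orbT.
  apply: (ln_le' mu0); apply: le_trans hmuT _; rewrite /T1 le_max lexx //.
have h5 := hK2 k kK2.
have h6 : 2 * ln T1 + c0' + 1 <= c0 * (lenR S (gam k) - eps).
  have : (2 * ln T1 + c0' + 1) / c0 <= lenR S (gam k) - eps by clear -h5; lra.
  by rewrite ler_pdivrMr // [c0 * _]mulrC.
have h7 : c0 * (lenR S (gam k) - eps) <= c0 * stable_len S (gam k).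
  by apply: ler_wpM2l => //; exact: ltW.
clear -h1 h2 h4 h6 h7; lra.
Qed.
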